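(* Let $K$ be a field of characteristic $\neq2$ and let $\tau=(-1,1,1,-1)$ or $\tau=(1,-1,-1,1)$. Then $\mathrm{Aut}\,A_\tau=G_3$, where $$G_3=\{\varphi\in\mathrm{Aut}\,K\langle x_1,x_2\rangle\mid \varphi=(\alpha_1x_1,\beta_2x_2)\ \text{or}\ \varphi=(\beta_1x_2,\alpha_2x_1),\ \alpha_1,\beta_2,\alpha_2,\beta_1\in K^*\}.$$
   Context: $A=K\langle x_1,x_2\rangle$ is the free associative algebra with unit on $x_1,x_2$; $\varphi=(f_1,f_2)$ denotes the algebra endomorphism with $\varphi(x_1)=f_1$, $\varphi(x_2)=f_2$. For $q_{ij}\in K$, the diagonal braiding $\tau=(q_{11},q_{12},q_{21},q_{22})$ on $A$ is the linear map $A\otimes A\to A\otimes A$ given on words $u,v$ by $(u\otimes v)\tau=q_{11}^{s_1t_1}q_{12}^{s_1t_2}q_{21}^{s_2t_1}q_{22}^{s_2t_2}\,(v\otimes u)$, where $s_i$ (resp. $t_i$) is the number of occurrences of $x_i$ in $u$ (resp. $v$). $A_\tau$ is $A$ equipped with $\tau$, and $\mathrm{Aut}\,A_\tau$ is the group of algebra automorphisms $\varphi$ of $A$ satisfying $(\varphi\otimes\varphi)((w)\tau)=((\varphi\otimes\varphi)(w))\tau$ for all $w\in A\otimes A$, viewed as a subgroup of $\mathrm{Aut}\,K\langle x_1,x_2\rangle$. *)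

(* Defs.v *)
From HB Require Import structures.
From mathcomp Require Import all_boot all_order all_algebra.
From mathcomp Require Import finmap.
From mathcomp.multinomials Require Import monalg.
Set Implicit Arguments. Unset Strict Implicit. Unset Printing Implicit Defensive.
Import Order.TTheory GRing.Theory Num.Theory.
Local Open Scope ring_scope.

Section FreeAlg.
Variable K : fieldType.

(* words in x_1, x_2 : letter (0 : 'I_2) is x_1, letter (1 : 'I_2) is x_2 *)
Definition word := {fmonom 'I_2}.

(* A = K<x_1,x_2> : free associative algebra with unit, basis = words *)
Definition FA := {malg K[word]}.

(* A (x) A, with basis the pairs (u, v) standing for u (x) v *)
Definition FA2 := {malg K[(word * word)%type]}.

Definition gen (i : 'I_2) : FA := << fmu i >>.
Definition x1 : FA := gen 0.
Definition x2 : FA := gen 1.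

(* the algebra endomorphism phi = (f1, f2): phi(x_1) = f1, phi(x_2) = f2 *)
Definition endo (f1 f2 : FA) (p : FA) : FA :=
  \sum_(m <- msupp p)
     p@_m *: \prod_(i <- (m : seq 'I_2)) (if i == 0 then f1 else f2).

Definition tens (a b : FA) : FA2 :=
  \sum_(u <- msupp a) \sum_(v <- msupp b) << a@_u * b@_v *g (u, v) >>.

Definition endo2 (f1 f2 : FA) (w : FA2) : FA2 :=
  \sum_(uv <- msupp w) w@_uv *: tens (endo f1 f2 << uv.1 >>) (endo f1 f2 << uv.2 >>).

Definition bcoef (q11 q12 q21 q22 : K) (u v : word) : K :=
  let s1 := count_mem (0 : 'I_2) (u : seq 'I_2) in
  let s2 := count_mem (1 : 'I_2) (u : seq 'I_2) in
  let t1 := count_mem (0 : 'I_2) (v : seq 'I_2) in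
  let t2 := count_mem (1 : 'I_2) (v : seq 'I_2) in
  q11 ^+ (s1 * t1) * q12 ^+ (s1 * t2) * q21 ^+ (s2 * t1) * q22 ^+ (s2 * t2).

(* the diagonal braiding tau : (u (x) v) tau = bcoef u v (v (x) u) *)
Definition braid (q11 q12 q21 q22 : K) (w : FA2) : FA2 :=
  \sum_(uv <- msupp w) << w@_uv * bcoef q11 q12 q21 q22 uv.1 uv.2 *g (uv.2, uv.1) >>.

Definition is_aut (f1 f2 : FA) : Prop := bijective (endo f1 f2).

Definition in_Aut_tau (q11 q12 q21 q22 : K) (f1 f2 : FA) : Prop :=
  is_aut f1 f2 /\
  forall w : FA2,
    endo2 f1 f2 (braid q11 q12 q21 q22 w) = braid q11 q12 q21 q22 (endo2 f1 f2 w).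

Definition in_G3 (f1 f2 : FA) : Prop :=
  is_aut f1 f2 /\
  ((exists a1 b2 : K, [/\ a1 != 0, b2 != 0, f1 = a1 *: x1 & f2 = b2 *: x2]) \/
   (exists b1 a2 : K, [/\ b1 != 0, a2 != 0, f1 = b1 *: x2 & f2 = a2 *: x1])).

End FreeAlg.

(* Main.v *)
Require Import Defs.
From HB Require Import structures.
From mathcomp Require Import all_boot all_order all_algebra.
From mathcomp Require Import finmap.
From mathcomp.multinomials Require Import monalg.
From mathcomp Require Import zify ring.
Import GRing.Theory.
Local Open Scope ring_scope.

Fixpoint enc (a : nat) (s : seq 'I_2) : nat :=
  if s is i :: s' then enc (a.*2 + i)%N s' else a.

Definition NN (s : seq 'I_2) := enc 1 s.

Lemma enc_cat a s t : enc a (s ++ t) = enc (enc a s) t.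
Proof. by elim: s a => //= i s IH a. Qed.

Lemma enc_lin t a : enc a t = (a * 2 ^ size t + enc 0 t)%N.
Proof.
elim: t a => [|i t IH] a /=; first by rewrite muln1 addn0.
rewrite IH [enc (0.*2 + i) t]IH expnS; rewrite -!muln2; lia.
Qed.

Lemma enc_lt t : (enc 0 t < 2 ^ size t)%N.
Proof.
elim: t => [|i t IH] //=.
rewrite enc_lin expnS. have := ltn_ord i. rewrite -!muln2. nia.
Qed.

Lemma NN_ge s : (2 ^ size s <= NN s)%N.
Proof. rewrite /NN enc_lin; lia. Qed.

Lemma NN_lt s : (NN s < 2 ^ (size s).+1)%N.
Proof. rewrite /NN enc_lin expnS. have := enc_lt s. lia. Qed.

Lemma NN_rcons s i : NN (rcons s i) = ((NN s).*2 + i)%N.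
Proof. by rewrite /NN -cats1 enc_cat. Qed.

Lemma NN_inj : injective NN.
Proof.
elim/last_ind => [|s i IH] t.
  case/lastP: t => [|t j] //; rewrite NN_rcons /NN /=.
  have := NN_ge t; rewrite /NN. have : (0 < 2 ^ size t)%N by rewrite expn_gt0. lia.
case/lastP: t => [|t j].
  rewrite NN_rcons /NN /=. have := NN_ge s; rewrite /NN.
  have : (0 < 2 ^ size s)%N by rewrite expn_gt0. lia.
rewrite !NN_rcons => E.
have hi := ltn_ord i; have hj := ltn_ord j.
have ij : (i = j :> nat) by lia.
have st : NN s = NN t by lia.
by rewrite (IH _ st) (val_inj ij).
Qed.

Lemma NN_catl u u' v : (NN u < NN u')%N -> (NN (u ++ v) < NN (u' ++ v))%N.
Proof.
rewrite /NN !enc_cat (enc_lin v (enc 1 u)) (enc_lin v (enc 1 u')).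
have : (0 < 2 ^ size v)%N by rewrite expn_gt0. nia.
Qed.

Lemma NN_catr u u' v : (NN u < NN u')%N -> (NN (v ++ u) < NN (v ++ u'))%N.
Proof.
have hA : (2 ^ size v <= enc 1 v)%N := NN_ge v.
have hv : (0 < 2 ^ size v)%N by rewrite expn_gt0.
rewrite /NN !enc_cat (enc_lin u (enc 1 v)) (enc_lin u' (enc 1 v)).
rewrite (enc_lin u 1) (enc_lin u' 1) !mul1n.
have := enc_lt u; have := enc_lt u'.
move: (enc 1 v) hA => A hA.
move: (enc 0 u) (enc 0 u') => r r'.
case: (ltngtP (size u) (size u')) => hs.
- have : (2 ^ (size u).+1 <= 2 ^ size u')%N by rewrite leq_pexp2l.
  rewrite expnS. move: (2 ^ size u)%N (2 ^ size u')%N => P P' hP.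
  have h1 : (A * (2 * P) <= A * P')%N by rewrite leq_mul2l hP orbT.
  have h2 : (P <= A * P)%N by rewrite leq_pmull //; lia.
  move=> hr hr0 hlt; lia.
- have : (2 ^ (size u').+1 <= 2 ^ size u)%N by rewrite leq_pexp2l.
  rewrite expnS. move: (2 ^ size u)%N (2 ^ size u')%N => P P'. nia.
- rewrite hs. move: (2 ^ size u')%N => P. nia.
Qed.

Lemma NN_catl_le u u' v : (NN u <= NN u')%N -> (NN (u ++ v) <= NN (u' ++ v))%N.
Proof.
rewrite leq_eqVlt => /orP[/eqP/NN_inj -> //|h].
exact/ltnW/NN_catl.
Qed.

Lemma NN_catr_le u u' v : (NN u <= NN u')%N -> (NN (v ++ u) <= NN (v ++ u'))%N.
Proof.
rewrite leq_eqVlt => /orP[/eqP/NN_inj -> //|h].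
exact/ltnW/NN_catr.
Qed.

Lemma NN_cat_le a b u v : (NN a <= NN u)%N -> (NN b <= NN v)%N ->
  (NN (a ++ b) <= NN (u ++ v))%N /\ (NN (a ++ b) = NN (u ++ v) -> a = u /\ b = v).
Proof.
move=> hau hbv; split.
  exact: leq_trans (NN_catr_le b v a hbv) (NN_catl_le a u v hau).
move=> E.
case: (eqVneq a u) => [eau|nau].
  subst; split=> //; apply: NN_inj; apply/eqP; rewrite eqn_leq hbv /=.
  case: (eqVneq (NN b) (NN v)) => [-> //|nbv].
  have lt : (NN b < NN v)%N by rewrite ltn_neqAle nbv.
  have := NN_catr b v u lt; lia.
have lt : (NN a < NN u)%N by rewrite ltn_neqAle hau (contra_neq (@NN_inj _ _)) //.
have := NN_catl a u b lt; have := NN_catr_le b v u hbv; lia.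
Qed.
Definition par (s : seq 'I_2) : bool * bool :=
  (odd (count_mem (0 : 'I_2) s), odd (count_mem (1 : 'I_2) s)).

Definition indep (a b : seq 'I_2) :=
  [&& par a != (false, false), par b != (false, false) & par a != par b].

Definition sub (a b : seq 'I_2) (m : seq 'I_2) : seq 'I_2 :=
  flatten (map (fun i : 'I_2 => if i == 0 then a else b) m).

Definition flip (i : 'I_2) : 'I_2 := if i == 0 then 1 else 0.

Lemma I2_cases (i : 'I_2) : i = 0 \/ i = 1.
Proof. by case: i => [[|[|]]] // h; [left|right]; apply/val_inj. Qed.

Lemma par_cat s t : par (s ++ t) = ((par s).1 (+) (par t).1, (par s).2 (+) (par t).2).
Proof. by rewrite /par !count_cat !oddD. Qed.

Lemma par_nil : par [::] = (false, false). Proof. by []. Qed.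

Lemma indep_nil a b : indep a b -> a <> [::] /\ b <> [::].
Proof.
rewrite /indep => /and3P[ha hb _]; split=> E; [move: ha|move: hb]; by rewrite E par_nil.
Qed.

Lemma indep_sym a b : indep a b = indep b a.
Proof.
rewrite /indep; case: (par a) (par b) => [x y] [z w].
by case: x; case: y; case: z; case: w.
Qed.

Lemma indep_step a c : indep a (a ++ c) -> indep a c.
Proof.
rewrite /indep par_cat; case: (par a) (par c) => [x y] [z w].
by case: x; case: y; case: z; case: w.
Qed.

Lemma sub_cat a b s t : sub a b (s ++ t) = sub a b s ++ sub a b t.
Proof. by rewrite /sub map_cat flatten_cat. Qed.

Lemma sub_cons a b i m : sub a b (i :: m) = (if i == 0 then a else b) ++ sub a b m.
Proof. by []. Qed.

Lemma sub_flip a b m : sub b a m = sub a b (map flip m).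
Proof.
elim: m => //= i m IH; rewrite !sub_cons IH /flip.
by case: (I2_cases i) => ->.
Qed.

Lemma sub_h a c m : sub a (a ++ c) m = sub a c (sub [:: 0] [:: 0; 1] m).
Proof.
elim: m => [|i m IH] //; rewrite sub_cons [sub _ _ (i :: m)]sub_cons sub_cat IH.
case: (I2_cases i) => -> /=.
  by rewrite (sub_cons a c 0) /= cats0.
by rewrite (sub_cons a c 0) (sub_cons a c 1) /= catA cats0.
Qed.

Definition inM a b (X : seq 'I_2) := exists m, X = sub a b m.

Lemma inM_sym a b X : inM a b X -> inM b a X.
Proof.
case=> m ->; exists (map flip m); rewrite (sub_flip a b) -map_comp map_id_in //.
by move=> i _ /=; rewrite /flip; case: (I2_cases i) => ->.
Qed.

Lemma code_core n a b X Y : (size a + size b <= n)%N -> indep a b ->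
  inM a b X -> inM a b Y -> a ++ X <> b ++ Y.
Proof.
elim: n a b X Y => [|n IH] a b X Y.
  move=> hs /indep_nil [ha hb]; case: a hs ha => //.
wlog hab : a b X Y / (size a <= size b)%N.
  move=> W hs hi hX hY E.
  case: (leqP (size a) (size b)) => h; first exact: (W a b X Y).
  apply: (W b a Y X) => //; [exact: ltnW|by rewrite addnC|by rewrite indep_sym
     |exact: inM_sym|exact: inM_sym].
move=> hs hi hX hY E.
set c := drop (size a) b.
have hb : b = a ++ c.
  have : take (size a) (a ++ X) = take (size a) (b ++ Y) by rewrite E.
  rewrite take_size_cat // takel_cat // => ht.
  by rewrite /c {1}ht cat_take_drop.
have hic : indep a c by apply: indep_step; rewrite -hb.
have [ha hc] := indep_nil _ _ hic.
have EX : X = c ++ Y.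
  by move: E; rewrite hb -catA => /eqP; rewrite eqseq_cat // => /andP[_ /eqP].
have sub_ac : forall m, inM a c (sub a b m).
  by move=> m; exists (sub [:: 0] [:: 0; 1] m); rewrite hb sub_h.
case: hX => mX hX; case: mX hX => [|i mX] hX.
  by move: EX hc; rewrite hX; case: (c).
have hY' := hY; case: hY' => mY hY'.
apply: (IH a c (if i == 0 then sub a b mX else c ++ sub a b mX) Y).
- have : (0 < size a)%N by move: ha; case: (a).
  move: hs; rewrite hb size_cat; lia.
- exact: hic.
- case: (I2_cases i) => -> /=; first exact: sub_ac.
  case: (sub_ac mX) => m ->; exists (1 :: m); by [].
- by rewrite hY'.
- by rewrite -EX hX sub_cons; case: (I2_cases i) => -> //=; rewrite hb catA.
Qed.

Lemma sub_nil a b m : indep a b -> sub a b m = [::] -> m = [::].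
Proof.
case/indep_nil=> ha hb; case: m => //= i m; rewrite sub_cons.
by case: (I2_cases i) => -> /=; [case: a ha|case: b hb].
Qed.

Lemma sub_inj a b : indep a b -> injective (sub a b).
Proof.
move=> hi m; elim: m => [|i m IH] m'.
  by move=> /esym /(sub_nil _ _ _ hi) ->.
case: m' => [|j m'].
  by move=> /(sub_nil _ _ _ hi).
rewrite !sub_cons.
case: (eqVneq i j) => [<-|nij].
  by move/eqP; rewrite eqseq_cat // => /andP[_ /eqP /IH ->].
have code := @code_core _ a b (sub a b m) (sub a b m') (leqnn _) hi.
have hM : forall m, inM a b (sub a b m) by move=> m0; exists m0.
case: (I2_cases i) (I2_cases j) nij => -> [] -> //= _.
  by move=> E; exfalso; apply: code (hM _) (hM _) E.
move=> E; exfalso.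
by apply: (@code_core _ a b (sub a b m') (sub a b m) (leqnn _) hi (hM _) (hM _)).
Qed.

Lemma sub_single a b m k : indep a b -> sub a b m = [:: k] ->
  exists i, m = [:: i] /\ (if i == 0 then a else b) = [:: k].
Proof.
move=> hi; have [ha hb] := indep_nil _ _ hi.
case: m => [|i m] //; rewrite sub_cons => E.
have hx : (if i == 0 then a else b) <> [::] by case: (i == 0).
move: E hx; case E' : (if i == 0 then a else b) => [|x [|y s]] //= [ex E] _.
by exists i; rewrite (sub_nil _ _ _ hi E) E' ex.
Qed.

Set Implicit Arguments. Unset Strict Implicit.
Section Alg.
Variable K : fieldType.

Lemma sum_delta (T : eqType) (V : zmodType) (s : seq T) (x : T) (F : T -> V) :
  uniq s -> \sum_(a <- s) (if a == x then F a else 0) = if x \in s then F x else 0.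
Proof.
elim: s => [|a s IH] /=; first by rewrite big_nil.
case/andP=> nas us; rewrite big_cons IH // in_cons [a == x]eq_sym.
case: (eqVneq x a) => [->|nax] /=; last by rewrite add0r.
by rewrite (negbTE nas) addr0.
Qed.

Definition LMP (f : FA K) (u : word) (c : K) :=
  [/\ c != 0, f@_u = c & forall w : word, (NN u < NN w)%N -> f@_w = 0].

Lemma LMP_supp f u c a : LMP f u c -> a \in msupp f -> (NN a <= NN u)%N.
Proof.
case=> _ _ h; rewrite -mcoeff_neq0; apply: contraR; rewrite -ltnNge => /h ->.
by rewrite eqxx.
Qed.

Lemma word_eqE (u v : word) : (u == v) = (u == v :> seq 'I_2).
Proof. exact: fmP. Qed.

Lemma NN_word_inj (u v : word) : NN u = NN v -> u = v.
Proof. by move/NN_inj; apply: val_inj. Qed.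

Lemma lmp_mul f g u v c d : LMP f u c -> LMP g v d -> LMP (f * g) (mmul u v) (c * d).
Proof.
move=> hf hg; have [c0 fu _] := hf; have [d0 gv _] := hg.
have uf : u \in msupp f by rewrite -mcoeff_neq0 fu.
have vg : v \in msupp g by rewrite -mcoeff_neq0 gv.
have F : forall w : word, (NN (mmul u v) <= NN w)%N ->
    (f * g)@_w = if w == (mmul u v) then c * d else 0.
  move=> w hw; rewrite mcoeffMl.
  rewrite (eq_big_seq (fun a => if a == u then
     (if w == (mmul u v) then c * d else 0) else 0)); last first.
    move=> a af.
    rewrite (eq_big_seq (fun b => if b == v then
      (if a == u then (if w == (mmul u v) then c * d else 0) else 0) else 0)).
      rewrite sum_delta ?fset_uniq // vg.
      by case: (a == u).
    move=> b bg.
    have [le1 eq1] := NN_cat_le _ _ _ _ (LMP_supp hf af) (LMP_supp hg bg).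
    move: hw; rewrite !fmM => hw.
    case: eqP => [hab|hab].
      have e : NN (a ++ b) = NN (u ++ v).
        have ew : NN (a ++ b) = NN w by rewrite -(fmM a b) hab.
        by apply/eqP; rewrite eqn_leq le1 ew hw.
      have [ea eb] := eq1 e.
      rewrite -hab.
      have -> : a = u by apply: val_inj.
      have -> : b = v by apply: val_inj.
      by rewrite !eqxx fu gv.
    case: (eqVneq b v) => [ebv|//]; case: (eqVneq a u) => [eau|//].
    subst; case: eqP => // ew; exfalso; apply: hab; by rewrite ew.
  by rewrite sum_delta ?fset_uniq // uf.
split; first by rewrite mulf_neq0.
  by rewrite F // eqxx.
move=> w hw; rewrite F ?(ltnW hw) //; case: eqP => // ew.
by move: hw; rewrite ew ltnn.
Qed.
End Alg.

Section Alg2.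
Variable K : fieldType.

Lemma lmp_one : LMP (1 : FA K) mone 1.
Proof.
split; [exact: oner_neq0| by rewrite mcoeff1 eqxx|].
move=> w hw; rewrite mcoeff1; case: eqP => // ew; by move: hw; rewrite ew ltnn.
Qed.

Lemma lmp_gen (k : word) : LMP (<< k >> : FA K) k 1.
Proof.
split; [exact: oner_neq0| by rewrite mcoeffU1 eqxx|].
move=> w hw; rewrite mcoeffU1; case: eqP => // ew; by move: hw; rewrite ew ltnn.
Qed.

Lemma lmp_prod (f1 f2 : FA K) (u1 u2 : word) (c1 c2 : K) (m : seq 'I_2) :
  LMP f1 u1 c1 -> LMP f2 u2 c2 ->
  LMP (\prod_(i <- m) (if i == 0 then f1 else f2)) (FMonom (sub u1 u2 m))
      (\prod_(i <- m) (if i == 0 then c1 else c2)).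
Proof.
move=> h1 h2; elim: m => [|i m IH].
  rewrite !big_nil.
  have -> : FMonom (sub u1 u2 [::]) = mone :> word by apply: val_inj; rewrite /= fm1.
  exact: lmp_one.
rewrite !big_cons.
have -> : FMonom (sub u1 u2 (i :: m)) =
   mmul (if i == 0 then u1 else u2) (FMonom (sub u1 u2 m)).
  by apply/eqP; rewrite fmP fmM /= sub_cons; case: (i == 0).
apply: lmp_mul; last exact: IH.
by case: (i == 0).
Qed.

Lemma lmp_uniq (f : FA K) u u' c c' : LMP f u c -> LMP f u' c' -> u = u'.
Proof.
case=> c0 fu hu [c0' fu' hu']; apply: NN_word_inj.
case: (ltngtP (NN u) (NN u')) => // h.
  by move: c0'; rewrite -fu' hu // eqxx.
by move: c0; rewrite -fu hu' // eqxx.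
Qed.

Lemma seq_max (T : eqType) (s : seq T) (g : T -> nat) x0 : x0 \in s ->
  exists2 x, x \in s & forall y, y \in s -> (g y <= g x)%N.
Proof.
elim: s x0 => // a s IH x0 _.
case: s IH => [|b s] IH.
  exists a; first by rewrite mem_head.
  by move=> y; rewrite inE => /eqP ->.
have [x xs hx] := IH b (mem_head _ _).
case: (leqP (g a) (g x)) => h.
  exists x; first by rewrite in_cons xs orbT.
  by move=> y; rewrite in_cons => /orP[/eqP->//|]; exact: hx.
exists a; first exact: mem_head.
move=> y; rewrite in_cons => /orP[/eqP->//|/hx hy].
exact: leq_trans hy (ltnW h).
Qed.

Lemma lmp_exists (f : FA K) : f != 0 -> exists u c, LMP f u c.
Proof.
move=> nf.
have [u0 u0f] : exists u0, u0 \in msupp f.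
  case: (fset_0Vmem (msupp f)) => [/eqP|[u0 h]]; last by exists u0.
  by rewrite msupp_eq0 (negbTE nf).
have u0f' : u0 \in (msupp f : seq word) by [].
have [u uf hu] := seq_max (fun u : word => NN u) u0f'.
exists u, f@_u; split; first by rewrite mcoeff_neq0.
  by [].
move=> w hw; apply/eqP; rewrite mcoeff_eq0; apply/negP => /hu.
by rewrite leqNgt hw.
Qed.

Lemma endo_lin (f1 f2 p : FA K) : endo f1 f2 p =
  \sum_(m <- msupp p) p@_m *: \prod_(i <- (m : seq 'I_2)) (if i == 0 then f1 else f2).
Proof. by []. Qed.

Lemma lmp_endo (f1 f2 : FA K) u1 u2 c1 c2 (p : FA K) :
  LMP f1 u1 c1 -> LMP f2 u2 c2 -> indep u1 u2 -> p != 0 ->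
  exists2 m, m \in msupp p & LMP (endo f1 f2 p) (FMonom (sub u1 u2 m))
     (p@_m * \prod_(i <- (m : seq 'I_2)) (if i == 0 then c1 else c2)).
Proof.
move=> h1 h2 hi np.
have [m0 m0p] : exists m0, m0 \in msupp p.
  case: (fset_0Vmem (msupp p)) => [/eqP|[u0 h]]; last by exists u0.
  by rewrite msupp_eq0 (negbTE np).
have m0p' : m0 \in (msupp p : seq word) by [].
have [m mp hm] := seq_max (fun m : word => NN (sub u1 u2 m)) m0p'.
have hlt : forall m', m' \in msupp p -> m' != m ->
    (NN (sub u1 u2 m') < NN (sub u1 u2 m))%N.
  move=> m' m'p nm; rewrite ltn_neqAle hm // andbT.
  apply/eqP => /NN_inj /(sub_inj _ _ hi) E; move/eqP: nm; apply; exact: val_inj.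
exists m => //.
have hW := fun m' : word => lmp_prod m' h1 h2.
have [cm0 _ _] := hW m.
split.
- by rewrite mulf_neq0 // mcoeff_neq0.
- rewrite endo_lin raddf_sum /=.
  rewrite (eq_big_seq (fun m' => if m' == m then
      p@_m * \prod_(i <- (m : seq 'I_2)) (if i == 0 then c1 else c2) else 0)).
    by rewrite sum_delta ?fset_uniq // mp.
  move=> m' m'p; rewrite mcoeffZ.
  case: eqP => [->|/eqP nm]; first by have [_ -> _] := hW m.
  have [_ _ ->] := hW m'; first by rewrite mulr0.
  exact: hlt.
- move=> w hw; rewrite endo_lin raddf_sum /= big1_seq // => m' /andP[_ m'p].
  rewrite mcoeffZ; have [_ _ ->] := hW m'; first by rewrite mulr0.
  exact: leq_ltn_trans (hm _ m'p) hw.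
Qed.

End Alg2.

Section Alg3.
Variable K : fieldType.


Lemma endoU1 (f1 f2 : FA K) (k : word) :
  endo f1 f2 << k >> = \prod_(i <- (k : seq 'I_2)) (if i == 0 then f1 else f2).
Proof. by rewrite /endo msuppU1 big_seq_fset1 mcoeffU1 eqxx scale1r. Qed.

Lemma endo_gen (f1 f2 : FA K) i : endo f1 f2 (gen K i) = if i == 0 then f1 else f2.
Proof. by rewrite /gen endoU1 fmU big_seq1. Qed.

Lemma endo0 (f1 f2 : FA K) : endo f1 f2 0 = 0.
Proof. by rewrite /endo msupp0 big_seq_fset0. Qed.

Lemma gen_neq0 i : gen K i != 0.
Proof.
apply/eqP => /(congr1 (mcoeff (fmu i))); rewrite /gen mcoeffU1 eqxx mcoeff0.
by move/eqP; rewrite oner_eq0.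
Qed.

Lemma tens_coef (a b : FA K) (u v : word) : (tens a b)@_(u, v) = a@_u * b@_v.
Proof.
rewrite /tens raddf_sum /=.
rewrite (eq_bigr (fun x => if x == u then
   (if v \in msupp b then a@_u * b@_v else 0) else 0)); last first.
  move=> x _; rewrite raddf_sum /=.
  rewrite (eq_bigr (fun y => if y == v then
     (if x == u then a@_u * b@_v else 0) else 0)); last first.
    move=> y _; rewrite mcoeffU xpair_eqE.
    by case: (eqVneq x u) => [->|]; case: (eqVneq y v) => [->|].
  by rewrite sum_delta ?fset_uniq //; case: (x == u); case: (_ \in _).
rewrite sum_delta ?fset_uniq //.
case: (boolP (u \in msupp a)) => [_|/mcoeff_outdom ->]; last by rewrite mul0r.
by case: (boolP (v \in msupp b)) => [_|/mcoeff_outdom ->]; last by rewrite mulr0.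
Qed.

Lemma braid_coef (q11 q12 q21 q22 : K) (w : FA2 K) (x y : word) :
  (braid q11 q12 q21 q22 w)@_(x, y) = w@_(y, x) * bcoef q11 q12 q21 q22 y x.
Proof.
rewrite /braid raddf_sum /=.
rewrite (eq_bigr (fun k => if k == (y, x) then
   w@_(y, x) * bcoef q11 q12 q21 q22 y x else 0)); last first.
  case=> [k1 k2] _; rewrite mcoeffU !xpair_eqE /=.
  by case: (eqVneq k1 y) => [->|]; case: (eqVneq k2 x) => [->|]; rewrite ?andbF.
rewrite sum_delta ?fset_uniq //.
by case: (boolP ((y, x) \in msupp w)) => [_|/mcoeff_outdom ->]; last by rewrite mul0r.
Qed.

Lemma endo2_coef (f1 f2 : FA K) (w : FA2 K) (x y : word) :
  (endo2 f1 f2 w)@_(x, y) = \sum_(k <- msupp w)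
     w@_k * ((endo f1 f2 << k.1 >>)@_x * (endo f1 f2 << k.2 >>)@_y).
Proof.
rewrite /endo2 raddf_sum /=; apply: eq_bigr => k _.
by rewrite mcoeffZ tens_coef.
Qed.

Lemma endo2U (f1 f2 : FA K) (c : K) (k : word * word) :
  endo2 f1 f2 << c *g k >> = c *: tens (endo f1 f2 << k.1 >>) (endo f1 f2 << k.2 >>).
Proof.
rewrite /endo2 msuppU; case: eqP => [->|_]; first by rewrite big_seq_fset0 scale0r.
by rewrite big_seq_fset1 mcoeffUU.
Qed.

Lemma braidU (q11 q12 q21 q22 : K) (c : K) (k : word * word) :
  braid q11 q12 q21 q22 << c *g k >> = << c * bcoef q11 q12 q21 q22 k.1 k.2 *g (k.2, k.1) >>.
Proof.
rewrite /braid msuppU; case: eqP => [->|_].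
  by rewrite big_seq_fset0 mul0r monalgU0.
by rewrite big_seq_fset1 mcoeffUU.
Qed.

Lemma braid_constraint (q11 q12 q21 q22 : K) (f1 f2 : FA K) :
  (forall w, endo2 f1 f2 (braid q11 q12 q21 q22 w) =
             braid q11 q12 q21 q22 (endo2 f1 f2 w)) ->
  forall (i j : 'I_2) (u v : word),
  u \in msupp (if i == 0 then f1 else f2) -> v \in msupp (if j == 0 then f1 else f2) ->
  bcoef q11 q12 q21 q22 u v = bcoef q11 q12 q21 q22 (fmu i) (fmu j).
Proof.
move=> H i j u v hu hv.
have := H << (fmu i, fmu j) >>.
rewrite braidU endo2U endo2U /= -!/(gen K _) !endo_gen scale1r mul1r.
move/(congr1 (mcoeff (v, u))); rewrite mcoeffZ !tens_coef braid_coef tens_coef.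
move: hu hv; rewrite -!mcoeff_neq0.
move: (_@_u) (_@_v) => A B hA hB.
move=> E. have hAB := mulf_neq0 hA hB. apply: (mulfI hAB). rewrite -E. ring.
Qed.

End Alg3.

Definition Bf (t : bool) (p q : bool * bool) :=
  if t then (p.1 && q.1) (+) (p.2 && q.2) else (p.1 && q.2) (+) (p.2 && q.1).

Lemma par_fmu0 : par (fmu (0 : 'I_2)) = (true, false).
Proof. by rewrite /par fmU. Qed.
Lemma par_fmu1 : par (fmu (1 : 'I_2)) = (false, true).
Proof. by rewrite /par fmU. Qed.

Lemma bool_deduce1 t p p0 q0 :
  Bf t p p = Bf t (true, false) (true, false) ->
  Bf t p p0 = Bf t (true, false) (true, false) ->
  Bf t p0 p0 = Bf t (true, false) (true, false) ->
  Bf t p q0 = Bf t (true, false) (false, true) ->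
  Bf t p0 q0 = Bf t (true, false) (false, true) ->
  Bf t q0 q0 = Bf t (false, true) (false, true) -> p = p0.
Proof.
case: p p0 q0 => [a b] [c d] [e f].
by case: t; case: a; case: b; case: c; case: d; case: e; case: f.
Qed.

Lemma bool_deduce2 t q p0 q0 :
  Bf t q q = Bf t (false, true) (false, true) ->
  Bf t q q0 = Bf t (false, true) (false, true) ->
  Bf t p0 p0 = Bf t (true, false) (true, false) ->
  Bf t p0 q = Bf t (true, false) (false, true) ->
  Bf t p0 q0 = Bf t (true, false) (false, true) ->
  Bf t q0 q0 = Bf t (false, true) (false, true) -> q = q0.
Proof.
case: q p0 q0 => [a b] [c d] [e f].
by case: t; case: a; case: b; case: c; case: d; case: e; case: f.
Qed.

Lemma bool_indep t p0 q0 :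
  Bf t p0 p0 = Bf t (true, false) (true, false) ->
  Bf t p0 q0 = Bf t (true, false) (false, true) ->
  Bf t q0 q0 = Bf t (false, true) (false, true) ->
  [&& p0 != (false, false), q0 != (false, false) & p0 != q0].
Proof.
case: p0 q0 => [c d] [e f].
by case: t; case: c; case: d; case: e; case: f.
Qed.

Lemma Bf_swap t p q : Bf t (p.2, p.1) (q.2, q.1) = Bf t p q.
Proof.
case: p q => [a b] [c d].
by case: t; case: a; case: b; case: c; case: d.
Qed.

Section Alg4.
Variable K : fieldType.

Lemma bcoef_sign (q11 q12 q21 q22 : K) :
  ((q11, q12, q21, q22) = (-1, 1, 1, -1) \/ (q11, q12, q21, q22) = (1, -1, -1, 1)) ->
  exists t, forall u v : word,
    bcoef q11 q12 q21 q22 u v = (-1) ^+ Bf t (par u) (par v).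
Proof.
case=> [[-> -> -> ->]|[-> -> -> ->]]; [exists true|exists false]; move=> u v;
  rewrite /bcoef /Bf /par /= signr_addb -!oddM !signr_odd !expr1n.
  by rewrite !mulr1.
by rewrite mul1r mulr1.
Qed.

Lemma sign_inj (x y : bool) : (2%:R : K) != 0 -> (-1) ^+ x = (-1) ^+ y :> K -> x = y.
Proof.
move=> h2; case: x; case: y => //= E; exfalso; move/eqP: h2; apply; rewrite expr0 expr1 in E.
  by rewrite mulr2n -{1}E addNr.
by rewrite mulr2n {1}E addNr.
Qed.

End Alg4.

Lemma one_eq0_I2 : ((1 : 'I_2) == 0) = false. Proof. by []. Qed.
Lemma zero_eq0_I2 : ((0 : 'I_2) == 0) = true. Proof. by []. Qed.

Lemma word1 (w : seq 'I_2) (l : 'I_2) : (size w <= 1)%N -> par w = par [:: l] -> w = [:: l].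
Proof.
case: w => [|x [|y s]] //=.
  by case: (I2_cases l) => ->.
by case: (I2_cases l) => ->; case: (I2_cases x) => ->.
Qed.

Section Alg5.
Variable K : fieldType.

Lemma supp_single (f : FA K) (u : word) c (l : 'I_2) : LMP f u c -> (u : seq 'I_2) = [:: l] ->
  (forall w, w \in msupp f -> par w = par u) -> f = c *: << u >>.
Proof.
move=> L hu hp; have [_ fu _] := L.
apply/malgP => w; rewrite mcoeffZ mcoeffU1.
case: (eqVneq u w) => [<-|nuw]; first by rewrite fu mulr1.
rewrite mulr0; apply: mcoeff_outdom; apply/negP => hw.
have le := LMP_supp L hw.
have hs : (size w <= 1)%N.
  have := NN_ge w; move: le; rewrite hu /NN /= => le.
  have := ltn_ord l.
  case: (size (fmonom_val w)) => [|[|n]] //; rewrite !expnS.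
  have := expn_gt0 2 n; lia.
have ew := word1 (l := l) hs; rewrite (hp _ hw) hu in ew; have {}ew := ew erefl.
by move/eqP: nuw; apply; apply: val_inj; rewrite /= hu ew.
Qed.

Lemma dir1 (q11 q12 q21 q22 : K) (f1 f2 : FA K) : (2%:R : K) != 0 ->
  ((q11, q12, q21, q22) = (-1, 1, 1, -1) \/ (q11, q12, q21, q22) = (1, -1, -1, 1)) ->
  in_Aut_tau q11 q12 q21 q22 f1 f2 -> in_G3 f1 f2.
Proof.
move=> h2 hq [haut Hc]; split => //.
have [g cg1 cg2] := haut.
have nz : forall i : 'I_2, (if i == 0 then f1 else f2) != 0.
  move=> i; apply/negP => /eqP E; move: (gen_neq0 K i).
  have g0 := cg1 0; rewrite endo0 in g0.
  by rewrite -(cg1 (gen K i)) endo_gen E g0 eqxx.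
have nf1 : f1 != 0 by have := nz 0; rewrite zero_eq0_I2.
have nf2 : f2 != 0 by have := nz 1; rewrite one_eq0_I2.
have [t ht] := bcoef_sign hq.
have C := braid_constraint Hc.
have CB : forall (i j : 'I_2) (u v : word), u \in msupp (if i == 0 then f1 else f2) ->
    v \in msupp (if j == 0 then f1 else f2) ->
    Bf t (par u) (par v) = Bf t (par (fmu i)) (par (fmu j)).
  by move=> i j u v hu hv; apply: (sign_inj h2); rewrite -!ht; exact: C.
have CB00 : forall u v : word, u \in msupp f1 -> v \in msupp f1 ->
    Bf t (par u) (par v) = Bf t (true, false) (true, false).
  by move=> u v hu hv; rewrite -par_fmu0; apply: (CB 0 0); rewrite zero_eq0_I2.
have CB01 : forall u v : word, u \in msupp f1 -> v \in msupp f2 ->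
    Bf t (par u) (par v) = Bf t (true, false) (false, true).
  move=> u v hu hv; rewrite -par_fmu0 -par_fmu1; apply: (CB 0 1).
    by rewrite zero_eq0_I2. by rewrite one_eq0_I2.
have CB11 : forall u v : word, u \in msupp f2 -> v \in msupp f2 ->
    Bf t (par u) (par v) = Bf t (false, true) (false, true).
  by move=> u v hu hv; rewrite -par_fmu1; apply: (CB 1 1); rewrite one_eq0_I2.
have [u1 [c1 L1]] := lmp_exists nf1.
have [u2 [c2 L2]] := lmp_exists nf2.
have u1f : u1 \in msupp f1 by have [h1 h2' _] := L1; rewrite -mcoeff_neq0 h2'.
have u2f : u2 \in msupp f2 by have [h1 h2' _] := L2; rewrite -mcoeff_neq0 h2'.
have hp1 : forall w, w \in msupp f1 -> par w = par u1.
  move=> w hw; apply: (bool_deduce1 (t := t) (q0 := par u2)).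
  - exact: (CB00 _ _ hw hw).
  - exact: (CB00 _ _ hw u1f).
  - exact: (CB00 _ _ u1f u1f).
  - exact: (CB01 _ _ hw u2f).
  - exact: (CB01 _ _ u1f u2f).
  - exact: (CB11 _ _ u2f u2f).
have hp2 : forall w, w \in msupp f2 -> par w = par u2.
  move=> w hw; apply: (bool_deduce2 (t := t) (p0 := par u1)).
  - exact: (CB11 _ _ hw hw).
  - exact: (CB11 _ _ hw u2f).
  - exact: (CB00 _ _ u1f u1f).
  - exact: (CB01 _ _ u1f hw).
  - exact: (CB01 _ _ u1f u2f).
  - exact: (CB11 _ _ u2f u2f).
have hind : indep u1 u2.
  apply: (bool_indep (t := t)).
  - exact: (CB00 _ _ u1f u1f).
  - exact: (CB01 _ _ u1f u2f).
  - exact: (CB11 _ _ u2f u2f).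
have hlet : forall k : 'I_2, exists i : 'I_2,
    (if i == 0 then (u1 : seq 'I_2) else (u2 : seq 'I_2)) = [:: k].
  move=> k; set p := g (gen K k).
  have ep : endo f1 f2 p = gen K k := cg2 _.
  have np : p != 0.
    by apply: contraNneq (gen_neq0 K k) => E; rewrite -ep E endo0.
  have [m mp Lm] := lmp_endo L1 L2 hind np.
  rewrite ep in Lm.
  have := lmp_uniq Lm (lmp_gen K (fmu k)).
  move/(congr1 (@fmonom_val _)); rewrite /= fmU => E.
  have [i [_ hi]] := sub_single _ _ _ _ hind E.
  by exists i.
have huu : ((u1 : seq 'I_2) = [:: 0] /\ (u2 : seq 'I_2) = [:: 1]) \/
           ((u1 : seq 'I_2) = [:: 1] /\ (u2 : seq 'I_2) = [:: 0]).
  have [i hi] := hlet 0; have [j hj] := hlet 1.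
  move: hi hj; case: (I2_cases i) => ->; case: (I2_cases j) => ->;
    rewrite ?zero_eq0_I2 ?one_eq0_I2 => hi hj.
  - by rewrite hi in hj.
  - by left.
  - by right.
  - by rewrite hi in hj.
have ef1 := supp_single L1 _ hp1.
have ef2 := supp_single L2 _ hp2.
have [c10 _ _] := L1; have [c20 _ _] := L2.
have wE : forall (u : word) (k : 'I_2), (u : seq 'I_2) = [:: k] -> u = fmu k.
  by move=> u k hu; apply: val_inj; rewrite /= hu fmU.
case: huu => [[h1 h2']|[h1 h2']].
  left; exists c1, c2; split => //.
    by rewrite (ef1 _ h1) /x1 /gen (wE _ _ h1).
  by rewrite (ef2 _ h2') /x2 /gen (wE _ _ h2').
right; exists c1, c2; split => //.
  by rewrite (ef1 _ h1) /x2 /gen (wE _ _ h1).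
by rewrite (ef2 _ h2') /x1 /gen (wE _ _ h2').
Qed.

End Alg5.

Definition smap (s : 'I_2 -> 'I_2) (u : word) : word := FMonom (map s (u : seq 'I_2)).

Lemma smapK s : (forall i, s (s i) = i) -> forall u, smap s (smap s u) = u.
Proof.
move=> hs u; apply: val_inj; rewrite /= -map_comp map_id_in //.
by move=> i _ /=; rewrite hs.
Qed.

Lemma sum_delta_const (T : eqType) (V : zmodType) (s : seq T) (x : T) (c : V) :
  uniq s -> \sum_(a <- s) (if a == x then c else 0) = if x \in s then c else 0.
Proof. exact: (sum_delta x (fun=> c)). Qed.

Section Alg6.
Variable K : fieldType.

Lemma scaleU (c : K) (k : word) : c *: (<< k >> : FA K) = << c *g k >>.
Proof. by apply/malgP => w; rewrite mcoeffZ !mcoeffU mulr_natr. Qed.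

Lemma comm_diag (q11 q12 q21 q22 : K) (f1 f2 : FA K) (s : 'I_2 -> 'I_2) (c : 'I_2 -> K) :
  (forall i, s (s i) = i) ->
  (forall i : 'I_2, (if i == 0 then f1 else f2) = << c i *g fmu (s i) >>) ->
  (forall u v : word, bcoef q11 q12 q21 q22 (smap s u) (smap s v) = bcoef q11 q12 q21 q22 u v) ->
  forall w, endo2 f1 f2 (braid q11 q12 q21 q22 w) = braid q11 q12 q21 q22 (endo2 f1 f2 w).
Proof.
move=> hs hF hb.
pose C (u : word) := \prod_(i <- (u : seq 'I_2)) c i.
have endo_mono : forall m : word, endo f1 f2 << m >> = << C m *g smap s m >>.
  move=> m; rewrite endoU1 /C /smap.
  elim: (m : seq 'I_2) => [|i l IH].
    rewrite !big_nil; apply/malgP => k; rewrite mcoeff1 mcoeffU.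
    have -> : FMonom (map s [::]) = mone :> word by apply: val_inj; rewrite /= fm1.
    by rewrite eq_sym.
  rewrite !big_cons IH hF malgM_def fgmulUU; congr << _ *g _ >>.
  by apply/eqP; rewrite fmP fmM fmU.
have diag : forall (w : FA2 K) (x y : word),
    (endo2 f1 f2 w)@_(x, y) = w@_(smap s x, smap s y) * (C (smap s x) * C (smap s y)).
  move=> w x y; rewrite endo2_coef.
  rewrite (eq_bigr (fun k => if k == (smap s x, smap s y) then
     w@_(smap s x, smap s y) * (C (smap s x) * C (smap s y)) else 0)); last first.
    case=> [k1 k2] _ /=; rewrite !endo_mono !mcoeffU xpair_eqE.
    have e : forall a b : word, (smap s a == b) = (a == smap s b).
      move=> a b; apply/eqP/eqP => [<-|->]; by rewrite smapK.
    rewrite !e.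
    case: (eqVneq k1 (smap s x)) => [->|?]; case: (eqVneq k2 (smap s y)) => [->|?] /=;
      by rewrite ?mulr1n ?mulr0n ?mulr0 ?mul0r ?mulr0.
  rewrite sum_delta_const ?fset_uniq //.
  by case: (boolP (_ \in msupp w)) => [_|/mcoeff_outdom ->]; last by rewrite mul0r.
move=> w; apply/malgP => [[x y]].
rewrite diag !braid_coef diag hb; ring.
Qed.

End Alg6.

Lemma par_flip (u : seq 'I_2) : par (map flip u) = ((par u).2, (par u).1).
Proof.
rewrite /par !count_map; congr (odd _, odd _); apply: eq_count => i /=;
  by case: (I2_cases i) => ->.
Qed.

Lemma smap_id (u : word) : smap (fun i => i) u = u.
Proof. by apply: val_inj; rewrite /= map_id. Qed.

Section Alg7.
Variable K : fieldType.

Lemma dir2 (q11 q12 q21 q22 : K) (f1 f2 : FA K) :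
  ((q11, q12, q21, q22) = (-1, 1, 1, -1) \/ (q11, q12, q21, q22) = (1, -1, -1, 1)) ->
  in_G3 f1 f2 -> in_Aut_tau q11 q12 q21 q22 f1 f2.
Proof.
move=> hq [haut [[a1 [b2 [ha hb e1 e2]]]|[b1 [a2 [ha hb e1 e2]]]]]; split => //.
  apply: (comm_diag (s := fun i => i) (c := fun i => if i == 0 then a1 else b2)) => //.
    move=> i; case: (I2_cases i) => ->; rewrite ?zero_eq0_I2 ?one_eq0_I2 /=.
      by rewrite e1 /x1 /gen scaleU.
    by rewrite e2 /x2 /gen scaleU.
  by move=> u v; rewrite !smap_id.
apply: (comm_diag (s := flip) (c := fun i => if i == 0 then b1 else a2)).
- by move=> i; case: (I2_cases i) => ->.
- move=> i; case: (I2_cases i) => ->; rewrite ?zero_eq0_I2 ?one_eq0_I2 /=.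
    by rewrite e1 /x2 /gen scaleU.
  by rewrite e2 /x1 /gen scaleU.
- have [t ht] := bcoef_sign hq.
  by move=> u v; rewrite !ht /smap /= !par_flip Bf_swap.
Qed.

End Alg7.

Unset Implicit Arguments.

Theorem lemma4 (K : fieldType) (q11 q12 q21 q22 : K) :
  (2%N \notin [pchar K]) ->
  ((q11, q12, q21, q22) = (-1, 1, 1, -1) \/ (q11, q12, q21, q22) = (1, -1, -1, 1)) ->
  forall f1 f2 : FA K, in_Aut_tau q11 q12 q21 q22 f1 f2 <-> in_G3 f1 f2.
Proof.
move=> h2 hq f1 f2.
have h2' : (2%:R : K) != 0 by move: h2; rewrite inE /=.
split; [exact: dir1|exact: dir2].
Qed.
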